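(* Let $f,g,\phi,c,\eta,w,\alpha,x_0,G,\Psi$ satisfy the following: $f,g\in C(\mathbb{R}_0^+\times\mathbb{R}_0^+,\mathbb{R}_0^+)$ are nondecreasing in the first variable for each fixed second variable; $\phi\in C(\mathbb{R}_0^+,\mathbb{R}_0^+)$ is strictly increasing with $\lim_{x\to\infty}\phi(x)=\infty$; $c\in C(\mathbb{R}_0^+,\mathbb{R}^+)$ is nondecreasing; $\eta,w\in C(\mathbb{R}_0^+,\mathbb{R}_0^+)$ are nondecreasing and positive on $(0,\infty)$; $\alpha\in C^1(\mathbb{R}_0^+,\mathbb{R}_0^+)$ is nondecreasing with $\alpha(t)\le t$; and $x_0,G,\Psi$ are as in the context. Suppose $u\in C(\mathbb{R}_0^+,\mathbb{R}_0^+)$ satisfies, for all $t\ge0$, $$\phi(u(t))\le c(t)+\int_0^{\alpha(t)}f(t,s)\,\eta(u(s))\,w(u(s))\,ds+\int_0^{t}g(t,s)\,\eta(u(s))\,w(u(s))\,ds.$$ Let $\tau>0$ be such that for all $t\in[0,\tau]$, $$\Psi(G(c(t)))+\int_0^{\alpha(t)}f(t,s)\,ds+\int_0^{t}g(t,s)\,ds\in\mathrm{Dom}(\Psi^{-1}).$$ Then for all $t\in[0,\tau]$, $$u(t)\le\phi^{-1}\Big\{G^{-1}\Big(\Psi^{-1}\Big[\Psi(G(c(t)))+\int_0^{\alpha(t)}f(t,s)\,ds+\int_0^{t}g(t,s)\,ds\Big]\Big)\Big\}.$$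
   Context: $\mathbb{R}_0^+=[0,\infty)$, $\mathbb{R}^+=(0,\infty)$. $\phi^{-1}$ denotes the inverse of $\phi$, defined on $[\phi(0),\infty)$. The constant $x_0$ is a real number with $\phi(0)\le x_0<c(0)$ such that $\int_{x_0}^x\frac{ds}{\eta(\phi^{-1}(s))}<\infty$ for every $x\ge x_0$ and $\int_{x_0}^\infty\frac{ds}{\eta(\phi^{-1}(s))}=\infty$ (in the paper: $x_0>0$ may be required when $\int_0^x\frac{ds}{\eta(\phi^{-1}(s))}=\infty$, and $x_0\ge0$ is allowed when this integral is finite). Define $G:[x_0,\infty)\to[0,\infty)$ by $G(x)=\int_{x_0}^x\frac{ds}{\eta(\phi^{-1}(s))}$; it is a strictly increasing bijection with inverse $G^{-1}$. Fix $x_1>0$ and define, for $x>0$, $\Psi(x)=\int_{x_1}^x\frac{ds}{w(\phi^{-1}(G^{-1}(s)))}$; $\Psi$ is strictly increasing on $(0,\infty)$, $\Psi^{-1}$ is its inverse and $\mathrm{Dom}(\Psi^{-1})=\Psi((0,\infty))$. *)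

(* Defs.v *)
From Stdlib Require Import Reals Lra ClassicalEpsilon.
Open Scope R_scope.

(* Riemann integral of h over [a,b] (oriented, as RiemannInt); when h is
   Riemann integrable this is the value of RiemannInt (independent of the proof). *)
Definition Int (h : R -> R) (a b : R) : R :=
  epsilon (inhabits 0) (fun I => exists pr : Riemann_integrable h a b, RiemannInt pr = I).

Definition cont_nonneg (h : R -> R) : Prop :=
  forall x, 0 <= x -> forall eps, eps > 0 -> exists d, d > 0 /\
    forall y, 0 <= y -> Rabs (y - x) < d -> Rabs (h y - h x) < eps.

Definition cont2_nonneg (f : R -> R -> R) : Prop :=
  forall t s, 0 <= t -> 0 <= s -> forall eps, eps > 0 -> exists d, d > 0 /\
    forall t' s', 0 <= t' -> 0 <= s' -> Rabs (t' - t) < d -> Rabs (s' - s) < d ->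
      Rabs (f t' s' - f t s) < eps.

Definition C1_nonneg (h : R -> R) : Prop :=
  exists h' : R -> R, cont_nonneg h' /\
    forall x, 0 <= x -> forall eps, eps > 0 -> exists d, d > 0 /\
      forall y, 0 <= y -> y <> x -> Rabs (y - x) < d ->
        Rabs ((h y - h x) / (y - x) - h' x) < eps.

Definition inv_fun (f : R -> R) (D : R -> Prop) (y : R) : R :=
  epsilon (inhabits 0) (fun x => D x /\ f x = y).

Definition lim_right_at (F : R -> R) (x0 L : R) : Prop :=
  forall eps, eps > 0 -> exists d, d > 0 /\
    forall a, x0 < a < x0 + d -> Rabs (F a - L) < eps.

Definition impInt (h : R -> R) (x0 x : R) : R :=
  epsilon (inhabits 0) (fun L => lim_right_at (fun a => Int h a x) x0 L).

(* phi^{-1}, defined on [phi(0),oo) *)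
Definition phi_inv (phi : R -> R) : R -> R := inv_fun phi (fun x => 0 <= x).

Definition G_integrand (phi eta : R -> R) (s : R) : R := / eta (phi_inv phi s).

Definition Gfun (phi eta : R -> R) (x0 x : R) : R :=
  if Rle_dec x x0 then 0 else impInt (G_integrand phi eta) x0 x.

Definition G_inv (phi eta : R -> R) (x0 : R) : R -> R :=
  inv_fun (Gfun phi eta x0) (fun x => x0 <= x).

Definition Psi (phi eta w : R -> R) (x0 x1 x : R) : R :=
  Int (fun s => / w (phi_inv phi (G_inv phi eta x0 s))) x1 x.

Definition Psi_inv (phi eta w : R -> R) (x0 x1 : R) : R -> R :=
  inv_fun (Psi phi eta w x0 x1) (fun x => 0 < x).

Definition in_Dom_Psi_inv (phi eta w : R -> R) (x0 x1 y : R) : Prop :=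
  exists x, 0 < x /\ Psi phi eta w x0 x1 x = y.

(* Main.v *)
Require Import Defs.
From Stdlib Require Import Reals Lra ClassicalEpsilon FunctionalExtensionality Ranalysis5 Classical.
Open Scope R_scope.


Lemma Int_eq h a b (pr : Riemann_integrable h a b) : Int h a b = RiemannInt pr.
Proof.
  unfold Int.
  assert (Hex : exists I, exists pr0 : Riemann_integrable h a b, RiemannInt pr0 = I)
    by (exists (RiemannInt pr); exists pr; reflexivity).
  destruct (epsilon_spec (inhabits 0) _ Hex) as [pr' Hpr'].
  rewrite <- Hpr'. apply RiemannInt_P5.
Qed.

Lemma Int_chasles h a b c : Riemann_integrable h a b -> Riemann_integrable h b c ->
  Int h a b + Int h b c = Int h a c.
Proof.
  intros p1 p2. rewrite (Int_eq _ _ _ p1), (Int_eq _ _ _ p2),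
    (Int_eq _ _ _ (RiemannInt_P24 p1 p2)). apply RiemannInt_P26.
Qed.

Lemma Int_le h1 h2 a b : a <= b -> Riemann_integrable h1 a b -> Riemann_integrable h2 a b ->
  (forall x, a <= x <= b -> h1 x <= h2 x) -> Int h1 a b <= Int h2 a b.
Proof.
  intros Hab p1 p2 H. rewrite (Int_eq _ _ _ p1), (Int_eq _ _ _ p2).
  apply RiemannInt_P19; auto. intros; apply H; lra.
Qed.

Lemma Int_bound h a b l v : a <= b -> Riemann_integrable h a b ->
  (forall x, a <= x <= b -> l <= h x <= v) -> l * (b - a) <= Int h a b <= v * (b - a).
Proof.
  intros Hab p H. rewrite (Int_eq _ _ _ p). apply RiemannInt_const_bound; auto.
  intros; apply H; lra.
Qed.

Lemma Int_zero h a : Int h a a = 0.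
Proof. rewrite (Int_eq _ _ _ (RiemannInt_P7 h a)). apply RiemannInt_P9. Qed.

Lemma Int_scal h a b k : Riemann_integrable h a b ->
  Int (fun x => k * h x) a b = k * Int h a b.
Proof.
  intros p.
  pose proof (RiemannInt_P14 a b 0) as p0.
  pose proof (RiemannInt_P10 k p0 p) as p3.
  assert (E : (fun x => fct_cte 0 x + k * h x) = (fun x => k * h x)).
  { apply functional_extensionality; intro x; unfold fct_cte; ring. }
  pose proof (RiemannInt_P13 p0 p p3) as H13.
  rewrite RiemannInt_P15 in H13.
  rewrite <- E, (Int_eq _ _ _ p3), (Int_eq _ _ _ p), H13. ring.
Qed.

Definition clamp a b x := Rmax a (Rmin b x).

Lemma clamp_in a b x : a <= b -> a <= clamp a b x <= b.
Proof. intros; unfold clamp, Rmax, Rmin; repeat destruct Rle_dec; lra. Qed.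

Lemma clamp_id a b x : a <= x <= b -> clamp a b x = x.
Proof. intros; unfold clamp, Rmax, Rmin; repeat destruct Rle_dec; lra. Qed.

Lemma clamp_lip a b x y : a <= b -> Rabs (clamp a b y - clamp a b x) <= Rabs (y - x).
Proof.
  intros; unfold clamp, Rmax, Rmin; repeat destruct Rle_dec;
  unfold Rabs; repeat destruct Rcase_abs; lra.
Qed.

Lemma cont_clamp_rel h a b : a <= b ->
  (forall p, a <= p <= b -> forall eps, eps > 0 -> exists d, d > 0 /\
     forall y, a <= y <= b -> Rabs (y - p) < d -> Rabs (h y - h p) < eps) ->
  continuity (fun x => h (clamp a b x)).
Proof.
  intros Hab H x. unfold continuity_pt, continue_in, limit1_in, limit_in.
  intros eps Heps.
  destruct (H (clamp a b x) (clamp_in a b x Hab) eps Heps) as [d [Hd Hy]].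
  exists d. split; [lra|]. intros y [_ Hyx]. simpl in *. unfold R_dist in *.
  apply Hy; [apply clamp_in; auto|].
  eapply Rle_lt_trans; [apply clamp_lip; auto| exact Hyx].
Qed.

Lemma cont_nonneg_clamp h a b : 0 <= a -> a <= b -> cont_nonneg h ->
  continuity (fun x => h (clamp a b x)).
Proof.
  intros Ha Hab H. apply cont_clamp_rel; auto.
  intros p Hp eps Heps. destruct (H p ltac:(lra) eps Heps) as [d [Hd Hy]].
  exists d; split; auto. intros y Hy2 Hyp; apply Hy; auto; lra.
Qed.

Lemma cont_pt_clamp h a b : a <= b -> (forall p, a <= p <= b -> continuity_pt h p) ->
  continuity (fun x => h (clamp a b x)).
Proof.
  intros Hab H. apply cont_clamp_rel; auto.
  intros p Hp eps Heps. destruct (H p Hp eps Heps) as [d [Hd Hy]].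
  exists d; split; auto. intros y Hy2 Hyp.
  destruct (Req_dec y p) as [->|Hne]. { rewrite Rminus_diag, Rabs_R0; lra. }
  apply (Hy y). split; [split; [exact I| auto]|]. exact Hyp.
Qed.

Lemma integrable_of_clamp h a b : a <= b -> continuity (fun x => h (clamp a b x)) ->
  Riemann_integrable h a b.
Proof.
  intros Hab Hc. apply Riemann_integrable_ext with (f := fun x => h (clamp a b x)).
  - intros x Hx. rewrite Rmin_left, Rmax_right in Hx by lra. rewrite clamp_id; auto.
  - apply continuity_implies_RiemannInt; auto.
Qed.

Lemma integrable_sym h a b : (a <= b -> Riemann_integrable h a b) ->
  (b <= a -> Riemann_integrable h b a) -> Riemann_integrable h a b.
Proof.
  intros H1 H2. destruct (Rle_dec a b). auto. apply RiemannInt_P1; apply H2; lra.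
Qed.

Lemma cpt_mult f1 f2 x : continuity_pt f1 x -> continuity_pt f2 x ->
  continuity_pt (fun y => f1 y * f2 y) x.
Proof. intros; exact (continuity_pt_mult f1 f2 x H H0). Qed.

Lemma cpt_inv f x : continuity_pt f x -> f x <> 0 -> continuity_pt (fun y => / f y) x.
Proof. intros; exact (continuity_pt_inv f x H H0). Qed.

Lemma cpt_comp f1 f2 x : continuity_pt f1 x -> continuity_pt f2 (f1 x) ->
  continuity_pt (fun y => f2 (f1 y)) x.
Proof. intros; exact (continuity_pt_comp f1 f2 x H H0). Qed.

Lemma cont_nonneg_pt h x : cont_nonneg h -> 0 < x -> continuity_pt h x.
Proof.
  intros H Hx. unfold continuity_pt, continue_in, limit1_in, limit_in.
  intros eps Heps. destruct (H x ltac:(lra) eps Heps) as [d [Hd Hy]].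
  exists (Rmin d x). split. apply Rmin_pos; lra.
  intros y [_ Hyx]. simpl in *. unfold R_dist in *.
  pose proof (Rmin_l d x); pose proof (Rmin_r d x). assert (K1: Rabs (y - x) < d) by lra. assert (K2 : Rabs (y-x) < x) by lra. apply Hy; auto.
  apply Rabs_def2 in K2. lra.
Qed.

Lemma cont_nonneg_comp h k : cont_nonneg h -> cont_nonneg k -> (forall x, 0 <= x -> 0 <= k x) ->
  cont_nonneg (fun x => h (k x)).
Proof.
  intros Hh Hk Hpos x Hx eps Heps.
  destruct (Hh (k x) (Hpos x Hx) eps Heps) as [d1 [Hd1 H1]].
  destruct (Hk x Hx d1 Hd1) as [d2 [Hd2 H2]].
  exists d2; split; [exact Hd2|]. intros y Hy Hyx. apply H1; auto.
Qed.

Lemma small_zero r : (forall eps, eps > 0 -> Rabs r < eps) -> r = 0.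
Proof.
  intros H. destruct (Req_dec r 0) as [|Hr]; auto.
  pose proof (Rabs_pos_lt r Hr). specialize (H (Rabs r) H0). lra.
Qed.

Lemma inv_cont (F g : R -> R) (lo y0 d0 : R) :
  (forall x y, lo < x -> x < y -> F x < F y) -> d0 > 0 ->
  (forall y, Rabs (y - y0) < d0 -> lo < g y /\ F (g y) = y) ->
  continuity_pt g y0.
Proof.
  intros Hmon Hd0 Hg. unfold continuity_pt, continue_in, limit1_in, limit_in.
  simpl; unfold R_dist. intros eps Heps.
  destruct (Hg y0) as [Hlo Hx]. { rewrite Rminus_diag, Rabs_R0; lra. }
  set (x := g y0) in *.
  set (e := Rmin eps (x - lo) / 2).
  assert (He : 0 < e /\ e < eps /\ lo < x - e).
  { unfold e. pose proof (Rmin_l eps (x - lo)). pose proof (Rmin_r eps (x - lo)).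
    assert (0 < Rmin eps (x - lo)) by (apply Rmin_pos; lra). lra. }
  assert (F1 : F (x - e) < y0) by (rewrite <- Hx; apply Hmon; lra).
  assert (F2 : y0 < F (x + e)) by (rewrite <- Hx at 1; apply Hmon; lra).
  exists (Rmin d0 (Rmin (y0 - F (x - e)) (F (x + e) - y0))).
  split. { apply Rmin_pos; [lra| apply Rmin_pos; lra]. }
  intros y [_ Hy].
  pose proof (Rmin_l d0 (Rmin (y0 - F (x - e)) (F (x + e) - y0))).
  pose proof (Rmin_r d0 (Rmin (y0 - F (x - e)) (F (x + e) - y0))).
  pose proof (Rmin_l (y0 - F (x - e)) (F (x + e) - y0)).
  pose proof (Rmin_r (y0 - F (x - e)) (F (x + e) - y0)).
  assert (Hy1 : Rabs (y - y0) < d0) by lra.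
  assert (Hy2 : Rabs (y - y0) < y0 - F (x - e)) by lra.
  assert (Hy3 : Rabs (y - y0) < F (x + e) - y0) by lra.
  destruct (Hg y Hy1) as [Hgy HFy].
  apply Rabs_def2 in Hy2. apply Rabs_def2 in Hy3.
  apply Rabs_def1.
  - destruct (Rlt_le_dec (g y) (x + e)) as [|Hc]; [lra|].
    destruct (Rle_lt_or_eq_dec _ _ Hc) as [Hc'|Hc'].
    + pose proof (Hmon (x + e) (g y) ltac:(lra) Hc'). lra.
    + rewrite <- Hc' in HFy. lra.
  - destruct (Rlt_le_dec (x - e) (g y)) as [|Hc]; [lra|].
    destruct (Rle_lt_or_eq_dec _ _ Hc) as [Hc'|Hc'].
    + pose proof (Hmon (g y) (x - e) Hgy Hc'). lra.
    + rewrite Hc' in HFy. lra.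
Qed.

Lemma inv_fun_spec F D y : (exists x, D x /\ F x = y) -> D (inv_fun F D y) /\ F (inv_fun F D y) = y.
Proof. intros H. unfold inv_fun. apply (epsilon_spec (inhabits 0) _ H). Qed.

Lemma Int_nonneg h a b : a <= b -> Riemann_integrable h a b ->
  (forall x, a <= x <= b -> 0 <= h x) -> 0 <= Int h a b.
Proof.
  intros Hab p H. rewrite (Int_eq _ _ _ p).
  pose proof (RiemannInt_P19 (RiemannInt_P14 a b 0) p Hab) as K.
  rewrite RiemannInt_P15 in K. replace 0 with (0 * (b - a)) by ring.
  apply K. intros; unfold fct_cte; apply H; lra.
Qed.

Lemma phi_facts (phi : R -> R)
  (Hphi_cont : cont_nonneg phi)
  (Hphi_inc : forall x y, 0 <= x -> x < y -> phi x < phi y)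
  (Hphi_inf : forall M, exists X, 0 <= X /\ forall x, X <= x -> M < phi x) :
  (forall y, phi 0 <= y -> 0 <= phi_inv phi y /\ phi (phi_inv phi y) = y) /\
  (forall y, phi 0 < y -> 0 < phi_inv phi y) /\
  (forall y1 y2, phi 0 <= y1 -> y1 <= y2 -> phi_inv phi y1 <= phi_inv phi y2) /\
  (forall x v, 0 <= x -> 0 <= v -> phi x <= phi v -> x <= v) /\
  (forall y, phi 0 < y -> continuity_pt (phi_inv phi) y).
Proof.
  assert (surj : forall y, phi 0 <= y -> exists x, 0 <= x /\ phi x = y).
  { intros y Hy. destruct (Req_dec y (phi 0)) as [->|Hne].
    { exists 0; split; [lra|reflexivity]. }
    destruct (Hphi_inf y) as [X [HX HXg]]. specialize (HXg X (Rle_refl X)).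
    assert (HX0 : 0 < X).
    { destruct (Rle_lt_or_eq_dec _ _ HX) as [|E]; auto. subst X. lra. }
    destruct (IVT_interv (fun t => phi (clamp 0 X t) - y) 0 X) as [z [Hz Hfz]].
    - intros a _. apply continuity_pt_minus.
      + apply cont_nonneg_clamp; auto; lra.
      + apply continuity_pt_const. intros ? ?; reflexivity.
    - exact HX0.
    - rewrite clamp_id by lra. lra.
    - rewrite clamp_id by lra. lra.
    - exists z. rewrite clamp_id in Hfz by lra. split; lra. }
  assert (spec : forall y, phi 0 <= y -> 0 <= phi_inv phi y /\ phi (phi_inv phi y) = y).
  { intros y Hy. unfold phi_inv. apply inv_fun_spec. apply surj; auto. }
  assert (pos : forall y, phi 0 < y -> 0 < phi_inv phi y).
  { intros y Hy. destruct (spec y ltac:(lra)) as [H1 H2].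
    destruct (Rle_lt_or_eq_dec _ _ H1) as [|E]; auto. rewrite <- E in H2. lra. }
  assert (leinv : forall x v, 0 <= x -> 0 <= v -> phi x <= phi v -> x <= v).
  { intros x v Hx Hv H. destruct (Rle_dec x v) as [|Hn]; auto.
    pose proof (Hphi_inc v x Hv ltac:(lra)). lra. }
  split; [exact spec|]. split; [exact pos|]. split.
  { intros y1 y2 H1 H2. destruct (spec y1 H1), (spec y2 ltac:(lra)).
    apply leinv; auto. lra. }
  split; [exact leinv|].
  intros y Hy. apply (inv_cont phi (phi_inv phi) 0 y (y - phi 0)).
  - intros; apply Hphi_inc; lra.
  - lra.
  - intros y' Hy'. apply Rabs_def2 in Hy'.
    split; [apply pos; lra| apply spec; lra].
Qed.

Lemma lim_diff h x0 a b La Lb : x0 < a -> a <= b ->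
  lim_right_at (fun a' => Int h a' a) x0 La ->
  lim_right_at (fun a' => Int h a' b) x0 Lb ->
  (forall p, x0 < p <= a -> Riemann_integrable h p a) -> Riemann_integrable h a b ->
  Lb - La = Int h a b.
Proof.
  intros Ha Hab HLa HLb Hi1 Hi2.
  apply Rminus_diag_uniq. apply small_zero. intros eps Heps.
  destruct (HLa (eps/2) ltac:(lra)) as [d1 [Hd1 H1]].
  destruct (HLb (eps/2) ltac:(lra)) as [d2 [Hd2 H2]].
  set (m := Rmin (Rmin d1 d2) (a - x0)).
  assert (Hm : 0 < m /\ m <= d1 /\ m <= d2 /\ m <= a - x0).
  { unfold m. pose proof (Rmin_l (Rmin d1 d2) (a - x0)). pose proof (Rmin_r (Rmin d1 d2) (a - x0)).
    pose proof (Rmin_l d1 d2). pose proof (Rmin_r d1 d2).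
    assert (0 < Rmin (Rmin d1 d2) (a - x0)) by (repeat apply Rmin_pos; lra). lra. }
  set (a' := x0 + m / 2).
  specialize (H1 a' ltac:(unfold a'; lra)). specialize (H2 a' ltac:(unfold a'; lra)).
  rewrite <- (Int_chasles h a' a b (Hi1 a' ltac:(unfold a'; lra)) Hi2) in H2.
  apply Rabs_def2 in H1. apply Rabs_def2 in H2. apply Rabs_def1; lra.
Qed.

Lemma G_facts (phi eta : R -> R) (x0 : R)
  (Hphi_cont : cont_nonneg phi)
  (Hphi_inc : forall x y, 0 <= x -> x < y -> phi x < phi y)
  (Hphi_inf : forall M, exists X, 0 <= X /\ forall x, X <= x -> M < phi x)
  (Heta_cont : cont_nonneg eta)
  (Heta_mon : forall x y, 0 <= x -> x <= y -> eta x <= eta y)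
  (Heta_pos : forall x, 0 < x -> 0 < eta x)
  (Hx0_lo : phi 0 <= x0)
  (Hx0_fin : forall x, x0 < x ->
     exists L, lim_right_at (fun a => Int (G_integrand phi eta) a x) x0 L)
  (Hx0_inf : forall M, exists x, x0 <= x /\ M < Gfun phi eta x0 x) :
  (forall a b, x0 < a -> a <= b ->
     Gfun phi eta x0 b - Gfun phi eta x0 a <= (b - a) * / eta (phi_inv phi a)) /\
  (forall a b, x0 <= a -> a < b -> Gfun phi eta x0 a < Gfun phi eta x0 b) /\
  (forall s, 0 < s -> x0 < G_inv phi eta x0 s /\ Gfun phi eta x0 (G_inv phi eta x0 s) = s) /\
  (forall a, x0 < a -> G_inv phi eta x0 (Gfun phi eta x0 a) = a) /\
  (forall s1 s2, 0 < s1 -> s1 <= s2 -> G_inv phi eta x0 s1 <= G_inv phi eta x0 s2) /\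
  (forall s, 0 < s -> continuity_pt (G_inv phi eta x0) s) /\
  (forall a, x0 < a -> 0 < Gfun phi eta x0 a).
Proof.
  destruct (phi_facts phi Hphi_cont Hphi_inc Hphi_inf) as [PI1 [PIpos [PImon [PIle PIc]]]].
  set (G := Gfun phi eta x0). set (gI := G_integrand phi eta).
  assert (gIpos : forall s, x0 < s -> 0 < gI s).
  { intros s Hs. unfold gI, G_integrand. apply Rinv_0_lt_compat. apply Heta_pos, PIpos. lra. }
  assert (gIanti : forall s1 s2, x0 < s1 -> s1 <= s2 -> gI s2 <= gI s1).
  { intros s1 s2 H1 H2. unfold gI, G_integrand. apply Rinv_le_contravar.
    - apply Heta_pos, PIpos; lra.
    - apply Heta_mon. apply PI1; lra. apply PImon; lra. }
  assert (gIc : forall s, x0 < s -> continuity_pt gI s).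
  { intros s Hs. unfold gI, G_integrand. apply cpt_inv.
    - apply cpt_comp. apply PIc; lra. apply cont_nonneg_pt; auto. apply PIpos; lra.
    - apply Rgt_not_eq, Heta_pos, PIpos; lra. }
  assert (gIi : forall p q, x0 < p -> p <= q -> Riemann_integrable gI p q).
  { intros p q Hp Hpq. apply integrable_of_clamp; auto. apply cont_pt_clamp; auto.
    intros; apply gIc; lra. }
  assert (gIb : forall a b, x0 < a -> a <= b -> (b - a) * gI b <= Int gI a b <= (b - a) * gI a).
  { intros a b Ha Hab. rewrite (Rmult_comm (b - a)), (Rmult_comm (b - a)).
    apply Int_bound; auto. intros x Hx. split; apply gIanti; lra. }
  assert (Glim : forall x, x0 < x -> lim_right_at (fun a => Int gI a x) x0 (G x)).
  { intros x Hx. unfold G, Gfun. destruct (Rle_dec x x0); [lra|].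
    unfold impInt. apply (epsilon_spec (inhabits 0) _ (Hx0_fin x Hx)). }
  assert (Gd : forall a b, x0 < a -> a <= b -> G b - G a = Int gI a b).
  { intros a b Ha Hab. apply (lim_diff gI x0 a b (G a) (G b) Ha Hab (Glim a Ha) (Glim b ltac:(lra))).
    - intros p Hp; apply gIi; lra.
    - apply gIi; lra. }
  assert (G0 : G x0 = 0).
  { unfold G, Gfun. destruct (Rle_dec x0 x0); [reflexivity|lra]. }
  assert (Gnn : forall a, x0 < a -> 0 <= G a).
  { intros a Ha. destruct (Rle_dec 0 (G a)) as [|Hn]; auto.
    destruct (Glim a Ha (- G a) ltac:(lra)) as [d [Hd Hy]].
    set (a' := x0 + Rmin d (a - x0) / 2).
    assert (Ha' : x0 < a' < x0 + d /\ a' <= a).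
    { unfold a'. pose proof (Rmin_l d (a - x0)). pose proof (Rmin_r d (a - x0)).
      assert (0 < Rmin d (a - x0)) by (apply Rmin_pos; lra). lra. }
    specialize (Hy a' ltac:(lra)). destruct (gIb a' a ltac:(lra) ltac:(lra)).
    pose proof (gIpos a Ha). apply Rabs_def2 in Hy. nra. }
  assert (Gs : forall a b, x0 <= a -> a < b -> G a < G b).
  { intros a b Ha Hab. destruct (Rle_lt_or_eq_dec _ _ Ha) as [Ha'|<-].
    - pose proof (Gd a b Ha' ltac:(lra)). destruct (gIb a b Ha' ltac:(lra)).
      pose proof (gIpos b ltac:(lra)). nra.
    - set (m := (x0 + b) / 2). pose proof (Gd m b ltac:(unfold m; lra) ltac:(unfold m; lra)).
      destruct (gIb m b ltac:(unfold m; lra) ltac:(unfold m; lra)).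
      pose proof (gIpos b ltac:(lra)). pose proof (Gnn m ltac:(unfold m; lra)).
      assert (0 < (b - m) * gI b) by (apply Rmult_lt_0_compat; unfold m; lra). lra. }
  assert (Gleinv : forall a b, x0 <= a -> x0 <= b -> G a <= G b -> a <= b).
  { intros a b Ha Hb H. destruct (Rle_dec a b) as [|Hn]; auto.
    pose proof (Gs b a Hb ltac:(lra)). lra. }
  assert (Gc : forall p, x0 < p -> continuity_pt G p).
  { intros p Hp. unfold continuity_pt, continue_in, limit1_in, limit_in. simpl; unfold R_dist.
    intros eps Heps. set (m := (x0 + p) / 2). set (L := gI m).
    assert (HL : 0 < L) by (apply gIpos; unfold m; lra).
    exists (Rmin ((p - x0) / 2) (eps / (L + 1))). split.
    { apply Rmin_pos. lra. apply Rdiv_lt_0_compat; lra. }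
    intros y [_ Hy].
    pose proof (Rmin_l ((p - x0) / 2) (eps / (L + 1))).
    pose proof (Rmin_r ((p - x0) / 2) (eps / (L + 1))).
    assert (Hy1 : Rabs (y - p) < (p - x0) / 2) by lra.
    assert (Hy2 : Rabs (y - p) * (L + 1) < eps).
    { apply Rlt_le_trans with (eps / (L + 1) * (L + 1)).
      apply Rmult_lt_compat_r; lra. right; field; lra. }
    apply Rabs_def2 in Hy1.
    destruct (Rle_dec p y) as [Hpy|Hpy].
    - pose proof (Gd p y Hp Hpy). destruct (gIb p y Hp Hpy).
      pose proof (gIanti m p ltac:(unfold m; lra) ltac:(unfold m; lra)).
      pose proof (gIpos p Hp). pose proof (gIpos y ltac:(lra)). rewrite Rabs_right in Hy2 by lra.
      assert ((y-p)*gI p <= (y-p)*L) by (apply Rmult_le_compat_l; unfold L; lra).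
      assert (0 <= (y-p)*gI y) by (apply Rmult_le_pos; lra).
      rewrite Rabs_right by lra. lra.
    - pose proof (Gd y p ltac:(unfold m in *; lra) ltac:(lra)).
      destruct (gIb y p ltac:(unfold m in *; lra) ltac:(lra)).
      pose proof (gIanti m y ltac:(unfold m; lra) ltac:(unfold m in *; lra)).
      pose proof (gIpos y ltac:(lra)). pose proof (gIpos p ltac:(lra)).
      rewrite Rabs_left in Hy2 by lra.
      assert ((p-y)*gI y <= (p-y)*L) by (apply Rmult_le_compat_l; unfold L; lra).
      assert (0 <= (p-y)*gI p) by (apply Rmult_le_pos; lra).
      rewrite Rabs_left1 by lra. lra. }
  assert (G0lim : forall eps, eps > 0 -> exists d, d > 0 /\ forall a, x0 < a < x0 + d -> G a < eps).
  { intros eps Heps. destruct (Glim (x0 + 1) ltac:(lra) eps Heps) as [d [Hd Hy]].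
    exists (Rmin d 1). split. apply Rmin_pos; lra. intros a Ha.
    pose proof (Rmin_l d 1). pose proof (Rmin_r d 1).
    specialize (Hy a ltac:(lra)). rewrite <- (Gd a (x0 + 1)) in Hy by lra.
    apply Rabs_def2 in Hy. lra. }
  assert (Gsurj : forall s, 0 < s -> exists x, x0 <= x /\ G x = s).
  { intros s Hs. destruct (Hx0_inf s) as [x [Hx Hgx]]. fold G in Hgx.
    assert (Hx' : x0 < x).
    { destruct (Rle_lt_or_eq_dec _ _ Hx) as [|E]; auto. subst x. lra. }
    destruct (G0lim s Hs) as [d [Hd Ha]].
    set (a := x0 + Rmin d (x - x0) / 2).
    assert (Ha' : x0 < a < x0 + d /\ a < x).
    { unfold a. pose proof (Rmin_l d (x - x0)). pose proof (Rmin_r d (x - x0)).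
      assert (0 < Rmin d (x - x0)) by (apply Rmin_pos; lra). lra. }
    specialize (Ha a ltac:(lra)).
    destruct (IVT_interv (fun t => G t - s) a x) as [z [Hz Hfz]].
    - intros q Hq. apply continuity_pt_minus. apply Gc; lra.
      apply continuity_pt_const. intros ? ?; reflexivity.
    - lra.
    - lra.
    - lra.
    - exists z. split; lra. }
  assert (GI : forall s, 0 < s -> x0 < G_inv phi eta x0 s /\ G (G_inv phi eta x0 s) = s).
  { intros s Hs. destruct (inv_fun_spec G (fun x => x0 <= x) s (Gsurj s Hs)) as [H1 H2].
    fold (G_inv phi eta x0 s) in H1, H2. split; auto.
    destruct (Rle_lt_or_eq_dec _ _ H1) as [|E]; auto. rewrite <- E, G0 in H2. lra. }
  split. { intros a b Ha Hab. rewrite (Gd a b Ha Hab). apply (gIb a b Ha Hab). }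
  split. { exact Gs. }
  split. { exact GI. }
  split. { intros a Ha. pose proof (Gs x0 a ltac:(lra) Ha). rewrite G0 in H.
    destruct (GI (G a) H) as [H1 H2]. apply Rle_antisym; apply Gleinv; lra. }
  split. { intros s1 s2 H1 H2. destruct (GI s1 H1), (GI s2 ltac:(lra)).
    apply Gleinv; lra. }
  split. { intros s Hs. apply (inv_cont G (G_inv phi eta x0) x0 s s).
    - intros; apply Gs; lra.
    - lra.
    - intros y Hy. apply Rabs_def2 in Hy. apply GI; lra. }
  intros a Ha. pose proof (Gs x0 a ltac:(lra) Ha). lra.
Qed.

Lemma Psi_facts (phi eta w : R -> R) (x0 x1 : R)
  (Hphi_cont : cont_nonneg phi)
  (Hphi_inc : forall x y, 0 <= x -> x < y -> phi x < phi y)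
  (Hphi_inf : forall M, exists X, 0 <= X /\ forall x, X <= x -> M < phi x)
  (Heta_cont : cont_nonneg eta)
  (Heta_mon : forall x y, 0 <= x -> x <= y -> eta x <= eta y)
  (Heta_pos : forall x, 0 < x -> 0 < eta x)
  (Hw_cont : cont_nonneg w)
  (Hw_mon : forall x y, 0 <= x -> x <= y -> w x <= w y)
  (Hw_pos : forall x, 0 < x -> 0 < w x)
  (Hx0_lo : phi 0 <= x0)
  (Hx0_fin : forall x, x0 < x ->
     exists L, lim_right_at (fun a => Int (G_integrand phi eta) a x) x0 L)
  (Hx0_inf : forall M, exists x, x0 <= x /\ M < Gfun phi eta x0 x)
  (Hx1 : 0 < x1) :
  (forall a b, 0 < a -> a < b -> Psi phi eta w x0 x1 a < Psi phi eta w x0 x1 b) /\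
  (forall a b, x0 < a -> a <= b ->
     Psi phi eta w x0 x1 (Gfun phi eta x0 b) - Psi phi eta w x0 x1 (Gfun phi eta x0 a)
       <= (b - a) / (eta (phi_inv phi a) * w (phi_inv phi a))).
Proof.
  destruct (phi_facts phi Hphi_cont Hphi_inc Hphi_inf) as [PI1 [PIpos [PImon [PIle PIc]]]].
  destruct (G_facts phi eta x0 Hphi_cont Hphi_inc Hphi_inf Heta_cont Heta_mon Heta_pos
     Hx0_lo Hx0_fin Hx0_inf) as [Gub [Gs [GI [GIG [GIm [GIc Gpos]]]]]].
  set (hP := fun s => / w (phi_inv phi (G_inv phi eta x0 s))).
  assert (hPpos : forall s, 0 < s -> 0 < hP s).
  { intros s Hs. unfold hP. apply Rinv_0_lt_compat, Hw_pos, PIpos.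
    destruct (GI s Hs). lra. }
  assert (hPanti : forall s1 s2, 0 < s1 -> s1 <= s2 -> hP s2 <= hP s1).
  { intros s1 s2 H1 H2. unfold hP. destruct (GI s1 H1), (GI s2 ltac:(lra)).
    pose proof (GIm s1 s2 H1 H2).
    apply Rinv_le_contravar.
    - apply Hw_pos, PIpos; lra.
    - apply Hw_mon. apply PI1; lra. apply PImon; lra. }
  assert (hPc : forall s, 0 < s -> continuity_pt hP s).
  { intros s Hs. unfold hP. destruct (GI s Hs). apply cpt_inv.
    - apply cpt_comp. apply cpt_comp. apply GIc; auto. apply PIc; lra.
      apply cont_nonneg_pt; auto. apply PIpos; lra.
    - apply Rgt_not_eq, Hw_pos, PIpos; lra. }
  assert (hPi : forall p q, 0 < p -> 0 < q -> Riemann_integrable hP p q).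
  { intros p q Hp Hq. apply integrable_sym; intros Hpq;
    (apply integrable_of_clamp; auto; apply cont_pt_clamp; auto; intros; apply hPc; lra). }
  assert (Pd : forall a b, 0 < a -> 0 < b -> Psi phi eta w x0 x1 b - Psi phi eta w x0 x1 a = Int hP a b).
  { intros a b Ha Hb. unfold Psi. fold hP.
    rewrite <- (Int_chasles hP x1 a b (hPi x1 a Hx1 Ha) (hPi a b Ha Hb)). ring. }
  split.
  { intros a b Ha Hab. pose proof (Pd a b Ha ltac:(lra)).
    assert (Hb : (b - a) * hP b <= Int hP a b).
    { rewrite Rmult_comm. apply (Int_bound hP a b (hP b) (hP a)); [lra| apply hPi; lra|].
      intros x Hx; split; apply hPanti; lra. }
    pose proof (hPpos b ltac:(lra)).
    assert (0 < (b - a) * hP b) by (apply Rmult_lt_0_compat; lra). lra. }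
  intros a b Ha Hab.
  pose proof (Gpos a Ha) as Ga.
  assert (GaGb : Gfun phi eta x0 a <= Gfun phi eta x0 b).
  { destruct (Rle_lt_or_eq_dec _ _ Hab) as [H|<-]; [left; apply Gs; lra| right; reflexivity]. }
  rewrite (Pd (Gfun phi eta x0 a) (Gfun phi eta x0 b) Ga ltac:(lra)).
  assert (H1 : Int hP (Gfun phi eta x0 a) (Gfun phi eta x0 b)
       <= hP (Gfun phi eta x0 a) * (Gfun phi eta x0 b - Gfun phi eta x0 a)).
  { apply (Int_bound hP _ _ 0 _); auto. apply hPi; lra.
    intros x Hx; split. left; apply hPpos; lra. apply hPanti; lra. }
  assert (H2 : hP (Gfun phi eta x0 a) = / w (phi_inv phi a)).
  { unfold hP. rewrite GIG; auto. }
  rewrite H2 in H1.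
  pose proof (Gub a b Ha Hab).
  assert (Hw : 0 < / w (phi_inv phi a)) by (apply Rinv_0_lt_compat, Hw_pos, PIpos; lra).
  assert (He : 0 < eta (phi_inv phi a)) by (apply Heta_pos, PIpos; lra).
  assert (/ w (phi_inv phi a) * (Gfun phi eta x0 b - Gfun phi eta x0 a) <=
          / w (phi_inv phi a) * ((b - a) * / eta (phi_inv phi a)))
    by (apply Rmult_le_compat_l; lra).
  replace ((b - a) / (eta (phi_inv phi a) * w (phi_inv phi a)))
    with (/ w (phi_inv phi a) * ((b - a) * / eta (phi_inv phi a))).
  lra. unfold Rdiv. rewrite Rinv_mult. ring.
Qed.

Theorem theorem2
  (f g : R -> R -> R) (phi c eta w alpha u : R -> R) (x0 x1 tau : R)
  (* f, g in C(R0+ x R0+, R0+), nondecreasing in the first variable *)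
  (Hf_cont : cont2_nonneg f)
  (Hf_nn : forall t s, 0 <= t -> 0 <= s -> 0 <= f t s)
  (Hf_mon : forall s t1 t2, 0 <= s -> 0 <= t1 -> t1 <= t2 -> f t1 s <= f t2 s)
  (Hg_cont : cont2_nonneg g)
  (Hg_nn : forall t s, 0 <= t -> 0 <= s -> 0 <= g t s)
  (Hg_mon : forall s t1 t2, 0 <= s -> 0 <= t1 -> t1 <= t2 -> g t1 s <= g t2 s)
  (* phi in C(R0+, R0+), strictly increasing, phi(x) -> oo *)
  (Hphi_cont : cont_nonneg phi)
  (Hphi_nn : forall x, 0 <= x -> 0 <= phi x)
  (Hphi_inc : forall x y, 0 <= x -> x < y -> phi x < phi y)
  (Hphi_inf : forall M, exists X, 0 <= X /\ forall x, X <= x -> M < phi x)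
  (* c in C(R0+, R+), nondecreasing *)
  (Hc_cont : cont_nonneg c)
  (Hc_pos : forall t, 0 <= t -> 0 < c t)
  (Hc_mon : forall t1 t2, 0 <= t1 -> t1 <= t2 -> c t1 <= c t2)
  (* eta, w in C(R0+, R0+), nondecreasing, positive on (0,oo) *)
  (Heta_cont : cont_nonneg eta)
  (Heta_nn : forall x, 0 <= x -> 0 <= eta x)
  (Heta_mon : forall x y, 0 <= x -> x <= y -> eta x <= eta y)
  (Heta_pos : forall x, 0 < x -> 0 < eta x)
  (Hw_cont : cont_nonneg w)
  (Hw_nn : forall x, 0 <= x -> 0 <= w x)
  (Hw_mon : forall x y, 0 <= x -> x <= y -> w x <= w y)
  (Hw_pos : forall x, 0 < x -> 0 < w x)
  (* alpha in C^1(R0+, R0+), nondecreasing, alpha(t) <= t *)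
  (Halpha_C1 : C1_nonneg alpha)
  (Halpha_nn : forall t, 0 <= t -> 0 <= alpha t)
  (Halpha_mon : forall t1 t2, 0 <= t1 -> t1 <= t2 -> alpha t1 <= alpha t2)
  (Halpha_le : forall t, 0 <= t -> alpha t <= t)
  (* x0 : phi(0) <= x0 < c(0), int_{x0}^x finite for x >= x0, int_{x0}^oo = oo *)
  (Hx0_lo : phi 0 <= x0)
  (Hx0_hi : x0 < c 0)
  (Hx0_fin : forall x, x0 < x ->
     exists L, lim_right_at (fun a => Int (G_integrand phi eta) a x) x0 L)
  (Hx0_inf : forall M, exists x, x0 <= x /\ M < Gfun phi eta x0 x)
  (Hx1 : 0 < x1)
  (* u in C(R0+, R0+) satisfying the integral inequality *)
  (Hu_cont : cont_nonneg u)
  (Hu_nn : forall t, 0 <= t -> 0 <= u t)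
  (Hu : forall t, 0 <= t ->
     phi (u t) <= c t
       + Int (fun s => f t s * eta (u s) * w (u s)) 0 (alpha t)
       + Int (fun s => g t s * eta (u s) * w (u s)) 0 t)
  (Htau : 0 < tau)
  (Hdom : forall t, 0 <= t <= tau ->
     in_Dom_Psi_inv phi eta w x0 x1
       (Psi phi eta w x0 x1 (Gfun phi eta x0 (c t))
          + Int (f t) 0 (alpha t) + Int (g t) 0 t)) :
  forall t, 0 <= t <= tau ->
    u t <= phi_inv phi (G_inv phi eta x0 (Psi_inv phi eta w x0 x1
             (Psi phi eta w x0 x1 (Gfun phi eta x0 (c t))
                + Int (f t) 0 (alpha t) + Int (g t) 0 t))).
Proof.
  intros T HT.
  destruct (phi_facts phi Hphi_cont Hphi_inc Hphi_inf) as [PI1 [PIpos [PImon [PIle PIc]]]].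
  destruct (G_facts phi eta x0 Hphi_cont Hphi_inc Hphi_inf Heta_cont Heta_mon Heta_pos
     Hx0_lo Hx0_fin Hx0_inf) as [Gub [Gs [GI [GIG [GIm [GIc Gpos]]]]]].
  destruct (Psi_facts phi eta w x0 x1 Hphi_cont Hphi_inc Hphi_inf Heta_cont Heta_mon Heta_pos
     Hw_cont Hw_mon Hw_pos Hx0_lo Hx0_fin Hx0_inf Hx1) as [Plt HB].
  assert (HT0 : 0 <= T) by lra.
  assert (cf : forall t, 0 <= t -> cont_nonneg (f t)).
  { intros t Ht s Hs eps Heps. destruct (Hf_cont t s Ht Hs eps Heps) as [d [Hd H]].
    exists d; split; [exact Hd|]. intros y Hy Hys. apply H; auto; try lra.
    rewrite Rminus_diag, Rabs_R0; lra. }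
  assert (cg : forall t, 0 <= t -> cont_nonneg (g t)).
  { intros t Ht s Hs eps Heps. destruct (Hg_cont t s Ht Hs eps Heps) as [d [Hd H]].
    exists d; split; [exact Hd|]. intros y Hy Hys. apply H; auto; try lra.
    rewrite Rminus_diag, Rabs_R0; lra. }
  assert (ceu : cont_nonneg (fun s => eta (u s))) by (apply cont_nonneg_comp; auto).
  assert (cwu : cont_nonneg (fun s => w (u s))) by (apply cont_nonneg_comp; auto).
  assert (IF : forall t a b, 0 <= t -> 0 <= a -> a <= b ->
     Riemann_integrable (fun s => f t s * eta (u s) * w (u s)) a b).
  { intros t a b Ht Ha Hab. apply integrable_of_clamp; auto. intro x. cbv beta.
    apply cpt_mult; [apply cpt_mult|].
    - exact (cont_nonneg_clamp (f t) a b Ha Hab (cf t Ht) x).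
    - exact (cont_nonneg_clamp (fun s => eta (u s)) a b Ha Hab ceu x).
    - exact (cont_nonneg_clamp (fun s => w (u s)) a b Ha Hab cwu x). }
  assert (IG : forall t a b, 0 <= t -> 0 <= a -> a <= b ->
     Riemann_integrable (fun s => g t s * eta (u s) * w (u s)) a b).
  { intros t a b Ht Ha Hab. apply integrable_of_clamp; auto. intro x. cbv beta.
    apply cpt_mult; [apply cpt_mult|].
    - exact (cont_nonneg_clamp (g t) a b Ha Hab (cg t Ht) x).
    - exact (cont_nonneg_clamp (fun s => eta (u s)) a b Ha Hab ceu x).
    - exact (cont_nonneg_clamp (fun s => w (u s)) a b Ha Hab cwu x). }
  assert (If : forall t a b, 0 <= t -> 0 <= a -> a <= b -> Riemann_integrable (f t) a b).
  { intros t a b Ht Ha Hab. apply integrable_of_clamp; auto.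
    exact (cont_nonneg_clamp (f t) a b Ha Hab (cf t Ht)). }
  assert (Ig : forall t a b, 0 <= t -> 0 <= a -> a <= b -> Riemann_integrable (g t) a b).
  { intros t a b Ht Ha Hab. apply integrable_of_clamp; auto.
    exact (cont_nonneg_clamp (g t) a b Ha Hab (cg t Ht)). }
  assert (alpha0 : alpha 0 = 0) by (pose proof (Halpha_nn 0 (Rle_refl 0)); pose proof (Halpha_le 0 (Rle_refl 0)); lra).
  assert (cT : x0 < c T) by (pose proof (Hc_mon 0 T (Rle_refl 0) HT0); lra).
  pose (FE := fun s => f T s * eta (u s) * w (u s)).
  pose (GE := fun s => g T s * eta (u s) * w (u s)).
  pose (z := fun t => c T + Int FE 0 (alpha t) + Int GE 0 t).
  pose (A := fun t => Int (f T) 0 (alpha t) + Int (g T) 0 t).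
  pose (K := fun y => eta (phi_inv phi y) * w (phi_inv phi y)).
  assert (Zd : forall t1 t2, 0 <= t1 -> t1 <= t2 ->
     z t2 - z t1 = Int FE (alpha t1) (alpha t2) + Int GE t1 t2).
  { intros t1 t2 H1 H2. pose proof (Halpha_nn t1 H1). pose proof (Halpha_mon t1 t2 H1 H2).
    unfold z. rewrite <- (Int_chasles FE 0 (alpha t1) (alpha t2)), <- (Int_chasles GE 0 t1 t2).
    ring. all: first [apply IF | apply IG]; lra. }
  assert (Ad : forall t1 t2, 0 <= t1 -> t1 <= t2 ->
     A t2 - A t1 = Int (f T) (alpha t1) (alpha t2) + Int (g T) t1 t2).
  { intros t1 t2 H1 H2. pose proof (Halpha_nn t1 H1). pose proof (Halpha_mon t1 t2 H1 H2).
    unfold A. rewrite <- (Int_chasles (f T) 0 (alpha t1) (alpha t2)), <- (Int_chasles (g T) 0 t1 t2).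
    ring. all: first [apply If | apply Ig]; lra. }
  assert (EWnn : forall s, 0 <= s -> 0 <= eta (u s) * w (u s)).
  { intros s Hs. apply Rmult_le_pos; [apply Heta_nn| apply Hw_nn]; auto. }
  assert (Zmon : forall t1 t2, 0 <= t1 -> t1 <= t2 -> z t1 <= z t2).
  { intros t1 t2 H1 H2. pose proof (Zd t1 t2 H1 H2). pose proof (Halpha_nn t1 H1).
    pose proof (Halpha_mon t1 t2 H1 H2).
    assert (0 <= Int FE (alpha t1) (alpha t2)).
    { apply Int_nonneg; auto. apply IF; lra. intros x Hx. unfold FE. rewrite Rmult_assoc.
      apply Rmult_le_pos. apply Hf_nn; lra. apply EWnn; lra. }
    assert (0 <= Int GE t1 t2).
    { apply Int_nonneg; auto. apply IG; lra. intros x Hx. unfold GE. rewrite Rmult_assoc.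
      apply Rmult_le_pos. apply Hg_nn; lra. apply EWnn; lra. }
    lra. }
  assert (z0 : z 0 = c T) by (unfold z; rewrite alpha0, !Int_zero; ring).
  assert (A0 : A 0 = 0) by (unfold A; rewrite alpha0, !Int_zero; ring).
  assert (Zge : forall t, 0 <= t -> c T <= z t).
  { intros t Ht. rewrite <- z0. apply Zmon; lra. }
  assert (Hphiu : forall s, 0 <= s <= T -> phi (u s) <= z s).
  { intros s Hs. pose proof (Hu s ltac:(lra)). pose proof (Hc_mon s T ltac:(lra) ltac:(lra)).
    pose proof (Halpha_nn s ltac:(lra)).
    assert (Int (fun r => f s r * eta (u r) * w (u r)) 0 (alpha s) <= Int FE 0 (alpha s)).
    { apply Int_le; auto. apply IF; lra. apply IF; lra. intros x Hx. unfold FE.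
      rewrite !Rmult_assoc. apply Rmult_le_compat_r. apply EWnn; lra. apply Hf_mon; lra. }
    assert (Int (fun r => g s r * eta (u r) * w (u r)) 0 s <= Int GE 0 s).
    { apply Int_le; try lra. apply IG; lra. apply IG; lra. intros x Hx. unfold GE.
      rewrite !Rmult_assoc. apply Rmult_le_compat_r. apply EWnn; lra. apply Hg_mon; lra. }
    unfold z. lra. }
  assert (HE : forall t r, 0 <= t <= T -> 0 <= r <= t -> eta (u r) * w (u r) <= K (z t)).
  { intros t r Ht Hr. pose proof (Zge t ltac:(lra)).
    destruct (PI1 (z t) ltac:(lra)) as [Hp1 Hp2].
    assert (Hur : u r <= phi_inv phi (z t)).
    { apply PIle; auto. apply Hu_nn; lra. rewrite Hp2.
      pose proof (Hphiu r ltac:(lra)). pose proof (Zmon r t ltac:(lra) ltac:(lra)). lra. }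
    unfold K. apply Rmult_le_compat. apply Heta_nn, Hu_nn; lra. apply Hw_nn, Hu_nn; lra.
    apply Heta_mon; auto. apply Hu_nn; lra. apply Hw_mon; auto. apply Hu_nn; lra. }
  assert (Zstep : forall t1 t2, 0 <= t1 -> t1 <= t2 -> t2 <= T ->
     z t2 - z t1 <= K (z t2) * (A t2 - A t1)).
  { intros t1 t2 H1 H2 H3. rewrite Zd, Ad by auto.
    pose proof (Halpha_nn t1 H1). pose proof (Halpha_mon t1 t2 H1 H2).
    pose proof (Halpha_le t2 ltac:(lra)).
    assert (I1 : Int FE (alpha t1) (alpha t2) <= Int (fun r => K (z t2) * f T r) (alpha t1) (alpha t2)).
    { apply Int_le; auto. apply IF; lra. apply Riemann_integrable_scal, If; lra.
      intros x Hx. unfold FE. rewrite Rmult_assoc, (Rmult_comm (K (z t2))).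
      apply Rmult_le_compat_l. apply Hf_nn; lra. apply HE; lra. }
    assert (I2 : Int GE t1 t2 <= Int (fun r => K (z t2) * g T r) t1 t2).
    { apply Int_le; auto. apply IG; lra. apply Riemann_integrable_scal, Ig; lra.
      intros x Hx. unfold GE. rewrite Rmult_assoc, (Rmult_comm (K (z t2))).
      apply Rmult_le_compat_l. apply Hg_nn; lra. apply HE; lra. }
    rewrite Int_scal in I1 by (apply If; lra). rewrite Int_scal in I2 by (apply Ig; lra).
    rewrite Rmult_plus_distr_l. lra. }
  assert (Kpos : forall y, phi 0 < y -> 0 < K y).
  { intros y Hy. unfold K. apply Rmult_lt_0_compat; [apply Heta_pos| apply Hw_pos]; apply PIpos; auto. }
  assert (Kmon : forall y1 y2, phi 0 <= y1 -> y1 <= y2 -> K y1 <= K y2).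
  { intros y1 y2 H1 H2. unfold K. pose proof (PImon y1 y2 H1 H2). destruct (PI1 y1 H1).
    apply Rmult_le_compat. apply Heta_nn; auto. apply Hw_nn; auto.
    apply Heta_mon; auto. apply Hw_mon; auto. }
  assert (Amon : forall t1 t2, 0 <= t1 -> t1 <= t2 -> A t1 <= A t2).
  { intros t1 t2 H1 H2. pose proof (Ad t1 t2 H1 H2). pose proof (Halpha_nn t1 H1).
    pose proof (Halpha_mon t1 t2 H1 H2).
    assert (0 <= Int (f T) (alpha t1) (alpha t2)).
    { apply Int_nonneg; [lra| apply If; lra| intros; apply Hf_nn; lra]. }
    assert (0 <= Int (g T) t1 t2).
    { apply Int_nonneg; [lra| apply Ig; lra| intros; apply Hg_nn; lra]. }
    lra. }
  assert (Mfex : exists M, 0 <= M /\ forall r, 0 <= r <= T -> f T r <= M).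
  { destruct (continuity_ab_maj (fun x => f T (clamp 0 T x)) 0 T HT0
      (fun c _ => cont_nonneg_clamp (f T) 0 T (Rle_refl 0) HT0 (cf T HT0) c)) as [Mx [HM HMx]].
    exists (f T (clamp 0 T Mx)). split. apply Hf_nn; auto. apply clamp_in; auto.
    intros r Hr. specialize (HM r Hr). rewrite (clamp_id 0 T r) in HM by lra. exact HM. }
  assert (Mgex : exists M, 0 <= M /\ forall r, 0 <= r <= T -> g T r <= M).
  { destruct (continuity_ab_maj (fun x => g T (clamp 0 T x)) 0 T HT0
      (fun c _ => cont_nonneg_clamp (g T) 0 T (Rle_refl 0) HT0 (cg T HT0) c)) as [Mx [HM HMx]].
    exists (g T (clamp 0 T Mx)). split. apply Hg_nn; auto. apply clamp_in; auto.
    intros r Hr. specialize (HM r Hr). rewrite (clamp_id 0 T r) in HM by lra. exact HM. }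
  destruct Mfex as [Mf [HMf0 HMf]]. destruct Mgex as [Mg [HMg0 HMg]].
  assert (ADb : forall t1 t2, 0 <= t1 -> t1 <= t2 -> t2 <= T ->
     A t2 - A t1 <= Mf * (alpha t2 - alpha t1) + Mg * (t2 - t1)).
  { intros t1 t2 H1 H2 H3. rewrite Ad by auto.
    pose proof (Halpha_nn t1 H1). pose proof (Halpha_mon t1 t2 H1 H2).
    pose proof (Halpha_le t2 ltac:(lra)).
    assert (Int (f T) (alpha t1) (alpha t2) <= Mf * (alpha t2 - alpha t1)).
    { apply (Int_bound (f T) _ _ 0 Mf); [lra| apply If; lra|].
      intros x Hx; split. apply Hf_nn; lra. apply HMf; lra. }
    assert (Int (g T) t1 t2 <= Mg * (t2 - t1)).
    { apply (Int_bound (g T) _ _ 0 Mg); [lra| apply Ig; lra|].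
      intros x Hx; split. apply Hg_nn; lra. apply HMg; lra. }
    lra. }
  assert (alip : forall s, 0 <= s -> exists d L, d > 0 /\ 0 <= L /\
     forall y, 0 <= y -> Rabs (y - s) < d -> Rabs (alpha y - alpha s) <= L * Rabs (y - s)).
  { intros s Hs. destruct Halpha_C1 as [h' [_ Hd]].
    destruct (Hd s Hs 1 Rlt_0_1) as [d [Hd0 Hy]].
    exists d, (Rabs (h' s) + 1). split; [exact Hd0|]. split; [pose proof (Rabs_pos (h' s)); lra|].
    intros y Hy0 Hys. destruct (Req_dec y s) as [->|Hne].
    { rewrite !Rminus_diag, Rabs_R0. lra. }
    specialize (Hy y Hy0 Hne Hys).
    set (q := (alpha y - alpha s) / (y - s)) in *.
    assert (Eq : alpha y - alpha s = q * (y - s)) by (unfold q; field; lra).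
    rewrite Eq, Rabs_mult. apply Rmult_le_compat_r. apply Rabs_pos.
    pose proof (Rabs_triang (q - h' s) (h' s)). replace (q - h' s + h' s) with q in H by ring. lra. }
  assert (Acont : forall s, 0 <= s <= T -> forall del, del > 0 -> exists e, e > 0 /\
     forall t, 0 <= t <= T -> Rabs (t - s) < e -> Rabs (A t - A s) <= del).
  { intros s Hs del Hdel. destruct (alip s ltac:(lra)) as [d [L [Hd [HL Hal]]]].
    set (B := Mf * L + Mg + 1).
    assert (HB0 : 0 < B) by (unfold B; pose proof (Rmult_le_pos Mf L HMf0 HL); lra).
    exists (Rmin d (del / B)). split. apply Rmin_pos; [lra| apply Rdiv_lt_0_compat; lra].
    intros t Ht Hts. pose proof (Rmin_l d (del / B)). pose proof (Rmin_r d (del / B)).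
    specialize (Hal t ltac:(lra) ltac:(lra)).
    assert (Hb : B * Rabs (t - s) <= del).
    { apply Rle_trans with (B * (del / B)). apply Rmult_le_compat_l; lra. right; field; lra. }
    assert (HML : Mf * Rabs (alpha t - alpha s) <= Mf * (L * Rabs (t - s)))
      by (apply Rmult_le_compat_l; auto).
    assert (HX : Mf * (L * Rabs (t - s)) + Mg * Rabs (t - s) <= B * Rabs (t - s)).
    { unfold B. pose proof (Rabs_pos (t - s)). nra. }
    destruct (Rle_dec s t) as [Hst|Hst].
    - pose proof (ADb s t ltac:(lra) Hst ltac:(lra)). pose proof (Amon s t ltac:(lra) Hst).
      pose proof (Halpha_mon s t ltac:(lra) Hst).
      rewrite Rabs_right in Hal by lra. rewrite (Rabs_right (t - s)) in * by lra.
      rewrite Rabs_right by lra.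
      assert (Mf * (alpha t - alpha s) <= Mf * Rabs (alpha t - alpha s)).
      { apply Rmult_le_compat_l; auto. apply RRle_abs. }
      lra.
    - pose proof (ADb t s ltac:(lra) ltac:(lra) ltac:(lra)). pose proof (Amon t s ltac:(lra) ltac:(lra)).
      pose proof (Halpha_mon t s ltac:(lra) ltac:(lra)).
      rewrite Rabs_left1 in Hal by lra. rewrite (Rabs_left (t - s)) in * by lra.
      rewrite Rabs_left1 by lra.
      assert (Mf * (alpha s - alpha t) <= Mf * Rabs (alpha t - alpha s)).
      { apply Rmult_le_compat_l; auto. rewrite Rabs_left1 by lra. lra. }
      lra. }
  pose (D := fun t => Psi phi eta w x0 x1 (Gfun phi eta x0 (z t)) - A t).
  pose (P := fun del t => D t - D 0 <= del * (K (z t) / K (z 0) - 1)).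
  assert (zgt : forall t, 0 <= t -> x0 < z t) by (intros t Ht; pose proof (Zge t Ht); lra).
  assert (Step : forall del t1 t2, del > 0 -> 0 <= t1 -> t1 <= t2 -> t2 <= T ->
     A t2 - A t1 <= del -> P del t1 -> P del t2).
  { intros del t1 t2 Hdel H1 H2 H3 HA HP1. unfold P in *.
    pose proof (zgt 0 (Rle_refl 0)). pose proof (zgt t1 H1). pose proof (zgt t2 ltac:(lra)).
    pose proof (Zmon 0 t1 (Rle_refl 0) H1). pose proof (Zmon t1 t2 H1 H2).
    pose proof (Kpos (z 0) ltac:(lra)) as K0p. pose proof (Kpos (z t1) ltac:(lra)) as K1p.
    pose proof (Kmon (z 0) (z t1) ltac:(lra) ltac:(lra)) as K01.
    pose proof (Kmon (z t1) (z t2) ltac:(lra) ltac:(lra)) as K12.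
    pose proof (HB (z t1) (z t2) ltac:(lra) ltac:(lra)) as HB1. fold (K (z t1)) in HB1.
    pose proof (Zstep t1 t2 H1 H2 H3) as ZS.
    pose proof (Amon t1 t2 H1 H2) as AM.
    set (K0 := K (z 0)) in *. set (K1 := K (z t1)) in *. set (K2 := K (z t2)) in *.
    assert (HB2 : Psi phi eta w x0 x1 (Gfun phi eta x0 (z t2)) - Psi phi eta w x0 x1 (Gfun phi eta x0 (z t1))
       <= (A t2 - A t1) * (K2 / K1)).
    { eapply Rle_trans; [exact HB1|]. unfold Rdiv.
      apply Rle_trans with (K2 * (A t2 - A t1) * / K1).
      apply Rmult_le_compat_r. left; apply Rinv_0_lt_compat; lra. lra.
      right; ring. }
    set (r1 := K1 / K0). set (r2 := K2 / K1).
    assert (Hr1 : 1 <= r1).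
    { unfold r1. apply Rmult_le_reg_r with K0; auto. unfold Rdiv. rewrite Rmult_assoc, Rinv_l by lra. lra. }
    assert (Hr2 : 1 <= r2).
    { unfold r2. apply Rmult_le_reg_r with K1; auto. unfold Rdiv. rewrite Rmult_assoc, Rinv_l by lra. lra. }
    assert (E : K2 / K0 = r1 * r2) by (unfold r1, r2; field; lra).
    rewrite E. fold r1 in HP1.
    assert ((A t2 - A t1) * (r2 - 1) <= del * (r2 - 1)) by (apply Rmult_le_compat_r; lra).
    assert (0 <= del * ((r1 - 1) * (r2 - 1))) by (apply Rmult_le_pos; [lra| apply Rmult_le_pos; lra]).
    assert (DD : D t2 - D t1 <= (A t2 - A t1) * (r2 - 1)).
    { unfold D. fold r2 in HB2. lra. }
    assert (del * (r1 * r2 - 1) = del * (r1 - 1) + del * (r2 - 1) + del * ((r1 - 1) * (r2 - 1))) by ring.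
    lra. }
  assert (PT : forall del, del > 0 -> P del T).
  { intros del Hdel.
    pose (Es := fun t => 0 <= t <= T /\ P del t).
    assert (P0 : P del 0).
    { unfold P. rewrite Rminus_diag. pose proof (zgt 0 (Rle_refl 0)).
      pose proof (Kpos (z 0) ltac:(lra)).
      replace (K (z 0) / K (z 0)) with 1 by (field; lra). lra. }
    destruct (completeness Es) as [m [Hub Hlub]].
    { exists T. intros x [Hx _]. lra. }
    { exists 0. split; [lra| exact P0]. }
    assert (Hm0 : 0 <= m) by (apply Hub; split; [lra|exact P0]).
    assert (HmT : m <= T) by (apply Hlub; intros x [Hx _]; lra).
    destruct (Acont m ltac:(lra) del Hdel) as [e [He Hc]].
    assert (Ht' : exists t', Es t' /\ m - e < t').
    { destruct (classic (exists t', Es t' /\ m - e < t')) as [|Hn]; auto.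
      assert (is_upper_bound Es (m - e)).
      { intros x Hx. destruct (Rle_dec x (m - e)) as [|Hx2]; auto.
        exfalso; apply Hn; exists x; split; auto; lra. }
      pose proof (Hlub _ H). lra. }
    destruct Ht' as [t' [[Ht'1 Ht'2] Ht'3]].
    assert (Ht'm : t' <= m) by (apply Hub; split; auto).
    assert (Pm : P del m).
    { apply (Step del t' m Hdel ltac:(lra) Ht'm HmT); auto.
      pose proof (Hc t' Ht'1 ltac:(apply Rabs_def1; lra)) as Hcc.
      pose proof (Rle_abs (-(A t' - A m))) as Hab. rewrite Rabs_Ropp in Hab. lra. }
    destruct (Rlt_le_dec m T) as [HmT'|HmT'].
    - exfalso.
      pose proof (Rmin_l T (m + e / 2)). pose proof (Rmin_r T (m + e / 2)).
      assert (Ht2 : m < Rmin T (m + e / 2)) by (apply Rmin_glb_lt; lra).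
      set (t2 := Rmin T (m + e / 2)) in *.
      assert (Es t2).
      { split; [lra|].
        apply (Step del m t2 Hdel Hm0 ltac:(lra) ltac:(lra)); auto.
        pose proof (Hc t2 ltac:(lra) ltac:(apply Rabs_def1; lra)) as Hcc.
        pose proof (Rle_abs (A t2 - A m)). lra. }
      pose proof (Hub t2 H1). lra.
    - replace T with m by lra. exact Pm. }
  assert (DT : D T - D 0 <= 0).
  { destruct (Rle_dec (D T - D 0) 0) as [|Hn]; auto. exfalso.
    pose proof (zgt 0 (Rle_refl 0)). pose proof (zgt T HT0).
    pose proof (Kpos (z 0) ltac:(lra)). pose proof (Kmon (z 0) (z T) ltac:(lra) (Zmon 0 T (Rle_refl 0) HT0)).
    set (R0 := K (z T) / K (z 0)).
    assert (HR : 0 < R0) by (unfold R0; apply Rdiv_lt_0_compat; lra).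
    set (X := D T - D 0) in *.
    assert (HX : 0 < X) by lra.
    pose proof (PT (X / (2 * R0)) ltac:(apply Rdiv_lt_0_compat; lra)) as HP. unfold P in HP. fold X R0 in HP.
    assert (X / (2 * R0) * (R0 - 1) = X / 2 - X / (2 * R0)) by (field; lra).
    assert (0 < X / (2 * R0)) by (apply Rdiv_lt_0_compat; lra).
    lra. }
  assert (HPsi : Psi phi eta w x0 x1 (Gfun phi eta x0 (z T)) <=
     Psi phi eta w x0 x1 (Gfun phi eta x0 (c T)) + Int (f T) 0 (alpha T) + Int (g T) 0 T).
  { unfold D in DT. rewrite z0, A0 in DT. unfold A in DT. lra. }
  set (V := Psi phi eta w x0 x1 (Gfun phi eta x0 (c T)) + Int (f T) 0 (alpha T) + Int (g T) 0 T) in *.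
  destruct (Hdom T HT) as [y [Hy HyV]]. fold V in HyV.
  destruct (inv_fun_spec (Psi phi eta w x0 x1) (fun x => 0 < x) V (ex_intro _ y (conj Hy HyV))) as [Hy1 Hy2].
  fold (Psi_inv phi eta w x0 x1 V) in Hy1, Hy2.
  set (y' := Psi_inv phi eta w x0 x1 V) in *.
  pose proof (zgt T HT0) as HzT.
  pose proof (Gpos (z T) HzT) as HGz.
  assert (Hle1 : Gfun phi eta x0 (z T) <= y').
  { destruct (Rle_dec (Gfun phi eta x0 (z T)) y') as [|Hn]; auto.
    pose proof (Plt y' (Gfun phi eta x0 (z T)) Hy1 ltac:(lra)). lra. }
  destruct (GI y' Hy1) as [HG1 HG2].
  assert (Hle2 : z T <= G_inv phi eta x0 y').
  { destruct (Rle_dec (z T) (G_inv phi eta x0 y')) as [|Hn]; auto.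
    pose proof (Gs (G_inv phi eta x0 y') (z T) ltac:(lra) ltac:(lra)). lra. }
  destruct (PI1 (G_inv phi eta x0 y') ltac:(lra)) as [Hv1 Hv2].
  apply PIle; auto. rewrite Hv2. pose proof (Hphiu T ltac:(lra)). lra.
Qed.
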